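(* Let $Q$ be a commutative A-loop, let $n\ge 0$, and let $x\in Q$ satisfy $x^{2^n}=1$. Then $(xy)^{2^n}=y^{2^n}$ for every $y\in Q$.
   Context: A loop is a set with a binary operation and neutral element $1$ in which all left and right translations are bijections; $\mathrm{Inn}(Q)$ is the stabilizer of $1$ in the group generated by all translations. A commutative A-loop is a commutative loop all of whose inner mappings are automorphisms. Such loops are power-associative, so powers are unambiguous. *)

(* Defs.v *)
From mathcomp Require Import all_boot.
Set Implicit Arguments. Unset Strict Implicit. Unset Printing Implicit Defensive.

Section Loops.
Variables (T : Type) (mul : T -> T -> T) (one : T).

Definition is_loop : Prop :=
  (forall x, mul one x = x /\ mul x one = x) /\
  (forall a, bijective (mul a)) /\
  (forall a, bijective (fun x => mul x a)).

Definition Lt (a : T) : T -> T := mul a.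
Definition Rt (a : T) : T -> T := fun x => mul x a.

(* The multiplication group Mlt(Q): the group (under composition) generated
   by all translations L_a, R_a.
   The clauses [Mlt_Linv]/[Mlt_Rinv] express f = L_a^{-1} o g
   (resp. R_a^{-1} o g) without naming the inverse map. *)
Inductive Mlt : (T -> T) -> Prop :=
  | Mlt_id : Mlt id
  | Mlt_L a g : Mlt g -> Mlt (Lt a \o g)
  | Mlt_R a g : Mlt g -> Mlt (Rt a \o g)
  | Mlt_Linv a g f : Mlt g -> (forall x, Lt a (f x) = g x) -> Mlt f
  | Mlt_Rinv a g f : Mlt g -> (forall x, Rt a (f x) = g x) -> Mlt f.

Definition inner_mapping (f : T -> T) : Prop := Mlt f /\ f one = one.

Definition loop_automorphism (f : T -> T) : Prop :=
  bijective f /\ forall x y, f (mul x y) = mul (f x) (f y).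

Definition is_comm_Aloop : Prop :=
  is_loop /\ (forall x y, mul x y = mul y x) /\
  (forall f, inner_mapping f -> loop_automorphism f).

(* Powers: x^0 = 1, x^(n+1) = x * x^n (unambiguous by power-associativity). *)
Fixpoint lpow (x : T) (n : nat) : T :=
  match n with 0 => one | n'.+1 => mul x (lpow x n') end.

End Loops.

(* Main.v *)
Require Import Defs.
From mathcomp Require Import all_boot.
From Stdlib Require Import ClassicalEpsilon Lia.
From mathcomp Require Import zify.

Section S.
Variables (T : Type) (mul : T -> T -> T) (one : T).
Hypothesis HQ : is_comm_Aloop mul one.

Lemma lid x : mul one x = x. Proof. by case: HQ => [[H _] _]; case: (H x). Qed.
Lemma rid x : mul x one = x. Proof. by case: HQ => [[H _] _]; case: (H x). Qed.
Lemma comm x y : mul x y = mul y x. Proof. by case: HQ => [_ [H _]]. Qed.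
Lemma bijL a : bijective (mul a). Proof. by case: HQ => [[_ [H _]] _]. Qed.

Lemma bijL' a : exists g, cancel (mul a) g /\ cancel g (mul a).
Proof. by case: (bijL a) => g h1 h2; exists g. Qed.

Definition ld (a : T) : T -> T := proj1_sig (constructive_indefinite_description _ (bijL' a)).

Lemma ldK a b : ld a (mul a b) = b.
Proof. rewrite /ld; case: (constructive_indefinite_description _ _) => g [h1 h2] /=; exact: h1. Qed.
Lemma mulK a b : mul a (ld a b) = b.
Proof. rewrite /ld; case: (constructive_indefinite_description _ _) => g [h1 h2] /=; exact: h2. Qed.
Lemma mul_inj a b c : mul a b = mul a c -> b = c.
Proof. by move=> H; rewrite -(ldK a b) H ldK. Qed.
Lemma ld_eq a b c : mul a b = c -> ld a c = b.
Proof. by move<-; rewrite ldK. Qed.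

Definition inv a := ld a one.
Lemma mul_inv a : mul a (inv a) = one. Proof. exact: mulK. Qed.
Lemma inv_mul a : mul (inv a) a = one. Proof. by rewrite comm mul_inv. Qed.
Lemma inv_inv a : inv (inv a) = a. Proof. exact: ld_eq (inv_mul a). Qed.
Lemma inv_one : inv one = one. Proof. exact: ld_eq (lid one). Qed.
Lemma ld_one a : ld one a = a. Proof. exact: ld_eq (lid a). Qed.
Lemma ld_self a : ld a a = one. Proof. exact: ld_eq (rid a). Qed.

Lemma Mlt_ext g f : Mlt mul g -> (forall z, g z = f z) -> Mlt mul f.
Proof. by move=> Hg E; apply: (Mlt_Linv (a:=one) Hg) => z; rewrite /Lt lid E. Qed.
Lemma Mlt_idf : Mlt mul (fun z => z).
Proof. by apply: (Mlt_ext _ _ (Mlt_id mul)) => z. Qed.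
Lemma MltL a g : Mlt mul g -> Mlt mul (fun z => mul a (g z)).
Proof. by move=> Hg; apply: (Mlt_ext _ _ (Mlt_L a Hg)) => z. Qed.
Lemma MltLi a g : Mlt mul g -> Mlt mul (fun z => ld a (g z)).
Proof. by move=> Hg; apply: (Mlt_Linv (a:=a) Hg) => z; rewrite /Lt mulK. Qed.

Lemma inner_hom f : Mlt mul f -> f one = one -> forall x y, f (mul x y) = mul (f x) (f y).
Proof. move=> Hf H1; case: HQ => [_ [_ H]]; by case: (H f (conj Hf H1)). Qed.

Lemma hom_ld f : (forall x y, f (mul x y) = mul (f x) (f y)) -> forall u v, f (ld u v) = ld (f u) (f v).
Proof. move=> H u v; symmetry; apply: ld_eq; by rewrite -H mulK. Qed.
Lemma hom_inv f : (forall x y, f (mul x y) = mul (f x) (f y)) -> f one = one -> forall u, f (inv u) = inv (f u).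
Proof. move=> H H1 u; by rewrite /inv (hom_ld _ H) H1. Qed.

Definition psi x y z := ld (mul x y) (mul x (mul y z)).
Lemma psi_Mlt x y : Mlt mul (psi x y).
Proof. apply: MltLi; apply: MltL; apply: MltL; exact: Mlt_idf. Qed.
Lemma psi_one x y : psi x y one = one.
Proof. by rewrite /psi rid ld_self. Qed.
Lemma psi_hom x y : forall u v, psi x y (mul u v) = mul (psi x y u) (psi x y v).
Proof. exact: inner_hom _ (psi_Mlt x y) (psi_one x y). Qed.
Lemma psi_x x y : psi x y x = x.
Proof. by rewrite /psi [mul y x]comm [mul x (mul x y)]comm ldK. Qed.

Lemma AIP a b : inv (mul a b) = mul (inv a) (inv b).
Proof.
have E6 : forall w x, mul (inv (ld w x)) (inv w) = inv x.
  move=> w x; set y := ld x w.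
  have Hw : mul x y = w by rewrite mulK.
  have Hxi : psi x y (inv x) = inv x.
    by rewrite (hom_inv _ (psi_hom x y) (psi_one x y)) psi_x.
  have E5 : psi x y (ld y (inv x)) = inv (mul x y).
    by rewrite /psi mulK mul_inv.
  have E3 : psi x y (inv y) = ld (mul x y) x.
    by rewrite /psi mul_inv rid.
  rewrite (hom_ld _ (psi_hom x y)) Hxi in E5.
  rewrite (hom_inv _ (psi_hom x y) (psi_one x y)) in E3.
  rewrite Hw in E5 E3.
  rewrite -E3 inv_inv -E5; exact: mulK.
have := E6 a (mul a b); rewrite ldK => H.
by rewrite -H comm.
Qed.

Lemma inv_ld u v : inv (ld u v) = ld (inv u) (inv v).
Proof. symmetry; apply: ld_eq; by rewrite -AIP mulK. Qed.

Lemma Lcomm x z : mul x (mul (inv x) z) = mul (inv x) (mul x z).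
Proof.
pose phi w := ld x (ld (inv x) w).
have Hm : Mlt mul phi by apply: MltLi; apply: MltLi; exact: Mlt_idf.
have H1 : phi one = one.
  rewrite /phi; have -> : ld (inv x) one = x by apply: ld_eq; exact: inv_mul.
  exact: ld_self.
have Hfix : phi (inv x) = inv x by rewrite /phi ld_self.
have Hh := inner_hom _ Hm H1.
have K : forall w, ld x w = mul (inv x) (phi w).
  move=> w; rewrite -Hfix -Hh /phi ldK; done.
have := K (mul x (mul (inv x) z)); rewrite ldK => K2.
have K3 := mul_inj _ _ _ K2.
have K4 : mul x z = ld (inv x) (mul x (mul (inv x) z)).
  by rewrite {1}K3 /phi mulK.
by rewrite K4 mulK.
Qed.


Definition P a z := mul a (ld (inv a) z).
Definition Pinv a z := mul (inv a) (ld a z).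

Lemma P_Pinv a z : P a (Pinv a z) = z.
Proof. by rewrite /P /Pinv ldK mulK. Qed.
Lemma Pinv_P a z : Pinv a (P a z) = z.
Proof. by rewrite /P /Pinv ldK mulK. Qed.
Lemma P1z z : P one z = z.
Proof. by rewrite /P inv_one ld_one lid. Qed.
Lemma ld_inv_one a : ld (inv a) one = a.
Proof. apply: ld_eq; exact: inv_mul. Qed.
Lemma Pz1 a : P a one = mul a a.
Proof. by rewrite /P ld_inv_one. Qed.
Lemma P_inv a z : P (inv a) z = Pinv a z.
Proof. by rewrite /P /Pinv inv_inv. Qed.

Lemma polar g : Mlt mul g -> forall z, g z = P (g one) (inv (g (inv z))).
Proof.
move=> Hg z; set c := g one.
pose h w := ld c (g w).
have Hm : Mlt mul h by apply: MltLi.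
have H1 : h one = one by rewrite /h ld_self.
have Hh := inner_hom _ Hm H1.
have Eg : forall w, g w = mul c (h w) by move=> w; rewrite /h mulK.
rewrite [g (inv z)]Eg AIP (hom_inv _ Hh H1) inv_inv /P ldK -Eg; done.
Qed.

Lemma R1 a b w : P (mul b a) w = mul b (P a (ld (inv b) w)).
Proof.
pose g z := mul b (mul a z).
have Hg : Mlt mul g by apply: MltL; apply: MltL; exact: Mlt_idf.
have Hc : g one = mul b a by rewrite /g rid.
have E := polar _ Hg (ld (inv a) (ld (inv b) w)).
rewrite Hc /g !AIP !inv_inv !mulK in E.
by rewrite -E.
Qed.

Lemma Bruck a b z : P a (P b (P a z)) = P (P a b) z.
Proof.
pose g w := mul a (ld (inv a) (mul b w)).
have Hg : Mlt mul g by apply: MltL; apply: MltLi; apply: MltL; exact: Mlt_idf.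
have Hc : g one = P a b by rewrite /g rid.
have E := polar _ Hg (ld (inv b) (P a z)).
rewrite Hc /g AIP inv_ld AIP !inv_inv mulK in E.
by rewrite -[X in P (P a b) X](Pinv_P a z) /Pinv -E /P.
Qed.

Lemma Psq a z : P (mul a a) z = P a (P a z).
Proof. by rewrite -Pz1 -Bruck P1z. Qed.

Notation pw := (lpow mul one).

Lemma pow_fix f a : (forall x y, f (mul x y) = mul (f x) (f y)) -> f one = one -> f a = a ->
  forall k, f (pw a k) = pw a k.
Proof. move=> H H1 Ha; elim=> [|k IH] //=; by rewrite H Ha IH. Qed.

Lemma pow_add x i j : mul (pw x i) (pw x j) = pw x (i + j).
Proof.
elim: i => [|i IH] /=; first by rewrite lid.
have F := pow_fix _ x (psi_hom x (pw x i)) (psi_one x (pw x i)) (psi_x x (pw x i)) j.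
rewrite /psi in F.
have : mul x (mul (pw x i) (pw x j)) = mul (mul x (pw x i)) (pw x j).
  by rewrite -[LHS](mulK (mul x (pw x i))) F.
by move<-; rewrite IH.
Qed.

Lemma pow1 x : pw x 1 = x. Proof. by rewrite /= rid. Qed.
Lemma pow2 x : pw x 2 = mul x x. Proof. by rewrite /= rid. Qed.

Lemma pow_sq x m : pw (mul x x) m = pw x (2 * m).
Proof.
elim: m => [|m IH]; first by [].
rewrite [LHS]/= IH -pow2 pow_add; congr (pw x _); lia.
Qed.

Lemma inv_pow x k : mul (inv x) (pw x k.+1) = pw x k.
Proof.
pose f w := mul (inv x) (mul x w).
have Hm : Mlt mul f by apply: MltL; apply: MltL; exact: Mlt_idf.
have H1 : f one = one by rewrite /f rid inv_mul.
have Hx : f x = x by rewrite /f -Lcomm inv_mul rid.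
have := pow_fix _ x (inner_hom _ Hm H1) H1 Hx k.
by rewrite /f.
Qed.

Lemma P_pow x k : P x (pw x k) = pw x k.+2.
Proof.
rewrite /P; have -> : ld (inv x) (pw x k) = pw x k.+1 by apply: ld_eq; exact: inv_pow.
done.
Qed.

Lemma iterP x k z : iter k (P x) z = P (pw x k) z.
Proof.
have : forall n, (forall z, iter n (P x) z = P (pw x n) z) /\ (forall z, iter n.+1 (P x) z = P (pw x n.+1) z).
  elim=> [|n [IH1 IH2]]; split=> w.
  - by rewrite /= P1z.
  - by rewrite /= rid.
  - exact: IH2.
  - by rewrite iterS iterSr IH1 Bruck P_pow.
by move=> H; case: (H k).
Qed.

Lemma iterP1 a m : iter m (P a) one = pw a (2 * m).
Proof.
elim: m => [|m IH]; first by [].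
rewrite iterS IH P_pow; congr (pw a _); lia.
Qed.

Lemma P_invol c z : mul c c = one -> P c z = z.
Proof. move=> H; have Hc : inv c = c by apply: ld_eq. by rewrite /P Hc mulK. Qed.

Lemma star x u z : P x (P u (P x (Pinv u z))) =
  mul (ld (inv x) u) (P x (P x (ld (ld (inv x) u) z))).
Proof.
set v := ld (inv x) u.
have Hu : u = mul v (inv x) by rewrite /v comm mulK.
have Hxu : P x u = mul v x by rewrite /P -/v comm.
have Hpi : Pinv u z = mul (inv v) (P x (ld v z)).
  rewrite -(Pinv_P u (mul (inv v) (P x (ld v z)))); congr (Pinv u _).
  by rewrite {1}Hu R1 ldK P_inv Pinv_P mulK.
by rewrite Bruck Hxu R1 Hpi ldK.
Qed.

Lemma Pinvsq a w : Pinv (mul a a) w = Pinv a (Pinv a w).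
Proof. by rewrite -(Pinv_P (mul a a) (Pinv a (Pinv a w))) Psq !P_Pinv. Qed.

Lemma ldc1 y r : ld (inv y) (mul y r) = mul y (ld (inv y) r).
Proof. apply: ld_eq; by rewrite -Lcomm mulK. Qed.
Lemma ldc2 y q : ld y (mul (inv y) q) = mul (inv y) (ld y q).
Proof. apply: ld_eq; by rewrite Lcomm mulK. Qed.

Lemma invol_case x y : mul x x = one -> mul (mul x y) (mul x y) = mul y y.
Proof. by move=> H; rewrite -Pz1 [mul x y]comm R1 ld_inv_one P_invol. Qed.

Lemma claim x y M : pw x (4 * M) = one ->
  pw (ld (mul y y) (mul (mul x y) (mul x y))) (2 * M) = one.
Proof.
move=> Hx.
set b := mul y y; set t := mul (mul x y) (mul x y); set s := ld b t.
set v0 := ld (inv x) y.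
pose Tm w := P t (Pinv b w).
have HPs : forall v, P s v = ld b (Tm (mul b v)).
  move=> v; symmetry; apply: ld_eq; rewrite /Tm /Pinv ldK.
  have Ht : t = mul b s by rewrite /s mulK.
  by rewrite Ht R1 ldK.
have Hit : forall n v, iter n (P s) v = ld b (iter n Tm (mul b v)).
  elim=> [|n IH] v; first by rewrite /= ldK.
  by rewrite iterS IH HPs mulK.
have HTm : forall w, Tm w = mul y (mul v0 (P x (P x (ld v0 (ld y w))))).
  move=> w; rewrite /Tm /t /b Psq Pinvsq [mul x y]comm !R1.
  rewrite /Pinv ldK ldc1 ldc2.
  have -> : mul y (ld (inv y) (P x (mul (inv y) (ld y (ld y w))))) =
            P y (P x (Pinv y (ld y w))) by [].
  by rewrite star.
have HiT : forall n w, iter n Tm w = mul y (mul v0 (iter (2 * n) (P x) (ld v0 (ld y w)))).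
  elim=> [|n IH] w; first by rewrite /= !mulK.
  have -> : 2 * n.+1 = (2 * n).+2 by lia.
  by rewrite iterS IH HTm !ldK.
have Hinv : forall z, iter (2 * M) (P x) z = z.
  move=> z; rewrite iterP; apply: P_invol.
  rewrite pow_add; have -> : 2 * M + 2 * M = 4 * M by lia.
  exact: Hx.
by rewrite -iterP1 Hit HiT Hinv rid !mulK ld_self.
Qed.

Lemma main k : forall x y, pw x (2 ^ k) = one -> pw (mul x y) (2 ^ k) = pw y (2 ^ k).
Proof.
elim: k => [|k IH] x y Hx.
  rewrite expn0 pow1 in Hx; by rewrite Hx lid.
set b := mul y y; set t := mul (mul x y) (mul x y); set s := ld b t.
have Hs : pw s (2 ^ k) = one.
  case: k IH Hx => [|j] IH Hx.
    rewrite expn1 pow2 in Hx.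
    by rewrite expn0 pow1 /s /t /b (invol_case _ y Hx) ld_self.
  have -> : 2 ^ j.+1 = 2 * 2 ^ j by rewrite expnS.
  apply: claim; have <- : 2 ^ j.+2 = 4 * 2 ^ j by rewrite !expnS; lia.
  exact: Hx.
have := IH s b Hs.
have -> : mul s b = t by rewrite comm /s mulK.
rewrite /t /b !pow_sq expnS; done.
Qed.

End S.

Theorem proposition5p5 (T : Type) (mul : T -> T -> T) (one : T)
  (HQ : is_comm_Aloop mul one) (n : nat) (x : T)
  (hx : lpow mul one x (2 ^ n) = one) :
  forall y : T, lpow mul one (mul x y) (2 ^ n) = lpow mul one y (2 ^ n).
Proof. move=> y; exact: (@main T mul one HQ n x y hx). Qed.
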